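(* For any $d \in \mathbb{N}$ and any graph class $\mathcal{C}$, the following are equivalent: (i) $\mathcal{C}$ has tree rank at most $d$; (ii) for every $r \in \mathbb{N}$ there exists $m \in \mathbb{N}$ such that every vertex of every graph in $\mathcal{C}$ has $(r,m)$-rank at most $d$.
   Context: Graphs are finite and simple. For a graph $G$ and vertex $v$, $N_r^G(v)$ is the closed $r$-neighborhood of $v$ (all vertices reachable from $v$ by a path with at most $r$ edges, including $v$); $G-S$ is the subgraph induced on $V(G)\setminus S$. The depth of a rooted tree is the number of edges on a leaf-to-root path; $T_{d,m}$ is the rooted tree of depth $d$ in which every non-leaf vertex has exactly $m$ children. A $\le r$-subdivision of a graph $H$ is obtained by replacing each edge $uv$ by a path from $u$ to $v$ with at most $r$ internal vertices (paths internally disjoint). $H$ is an $r$-shallow topological minor of $G$ if $G$ has a subgraph isomorphic to a $\le r$-subdivision of $H$. A graph class $\mathcal{C}$ has tree rank at most $d$ if for every $r\in\mathbb{N}$ there exists $m\in\mathbb{N}$ such that no $G\in\mathcal{C}$ contains $T_{d,m}$ as an $r$-shallow topological minor. The $(r,m)$-rank of vertices of $G$ (values in $\mathbb{N}\cup\{\infty\}$) is defined by the following procedure: initially every vertex has rank $\infty$; in rounds $i=1,2,3,\dots$, every vertex $v$ that currently has rank $\infty$ receives rank $i$ if there exists a set $S\subseteq V(G)\setminus\{v\}$ with $|S|\le m$ such that every vertex of $N_r^{G-S}(v)\setminus\{v\}$ received a finite rank in rounds $1,\dots,i-1$ (all vertices are checked simultaneously in a round); the procedure stops when all vertices have finite rank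 or a round assigns no new rank. Vertices still of rank $\infty$ keep rank $\infty$. *)

(* Defs.v *)
From mathcomp Require Import all_boot.
Set Implicit Arguments. Unset Strict Implicit. Unset Printing Implicit Defensive.

Record sgraph := SGraph {
  gn : nat;
  gadj : rel 'I_gn;
  gsym : symmetric gadj;
  girr : irreflexive gadj }.

Definition vert (G : sgraph) := 'I_(gn G).

Definition graph_class := sgraph -> Prop.

(* Closed k-neighbourhood of v in G - S (for v \notin S): vertices reachable
   from v by a path with at most k edges avoiding S. *)
Fixpoint nballS (G : sgraph) (S : {set vert G}) (k : nat) (v : vert G)
  : {set vert G} :=
  match k with
  | 0 => [set v]
  | k'.+1 => nballS S k' v :|:
      [set u | (u \notin S) && [exists w in nballS S k' v, gadj w u]]
  end.

(* ranked G r m i = set of vertices that received a finite (r,m)-rank in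
   rounds 1..i of the procedure. *)
Fixpoint ranked (G : sgraph) (r m : nat) (i : nat) : {set vert G} :=
  match i with
  | 0 => set0
  | i'.+1 => ranked G r m i' :|:
      [set v | [exists S : {set vert G},
         [&& v \notin S, #|S| <= m &
             (nballS S r v :\ v) \subset ranked G r m i']]]
  end.

Definition rank_le (G : sgraph) (r m d : nat) (v : vert G) : Prop :=
  v \in ranked G r m d.

(* H (on finType VH with symmetric edge relation eH) is an r-shallow
   topological minor of G: G contains a subgraph isomorphic to a
   <= r-subdivision of H.  f maps branch vertices; P a b is the sequence of
   internal vertices of the path replacing the edge ab. *)
Definition shallow_top_minor (r : nat) (G : sgraph) (VH : finType) (eH : rel VH)
  : Prop :=
  exists f : VH -> vert G, injective f /\
  exists P : VH -> VH -> seq (vert G),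
    (forall a b, eH a b ->
       [/\ size (P a b) <= r, uniq (P a b),
           path (@gadj G) (f a) (rcons (P a b) (f b)) &
           forall x, x \in P a b -> forall c, x != f c]) /\
    (forall a b c d, eH a b -> eH c d ->
       ~~ (((a == c) && (b == d)) || ((a == d) && (b == c))) ->
       forall x, x \in P a b -> x \notin P c d).

(* The rooted tree T_{d,m}: vertices are sequences over 'I_m of length <= d
   (the root is the empty sequence); s is a child of t iff s extends t by one
   letter. *)
Definition tvert (d m : nat) := {k : 'I_d.+1 & k.-tuple 'I_m}.
Definition tseq d m (x : tvert d m) : seq 'I_m := tagged x.
Definition tchild d m (x y : tvert d m) : bool :=
  (size (tseq y) == (size (tseq x)).+1) && (take (size (tseq x)) (tseq y) == tseq x).
Definition tadj d m : rel (tvert d m) :=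
  fun x y => tchild x y || tchild y x.

Definition tree_rank_le (C : graph_class) (d : nat) : Prop :=
  forall r : nat, exists m : nat, forall G, C G ->
    ~ shallow_top_minor r G (@tadj d m).

(* Main.v *)
Require Import Defs.
From mathcomp Require Import all_boot.
From mathcomp Require Import zify.
Set Implicit Arguments. Unset Strict Implicit. Unset Printing Implicit Defensive.

Lemma nball_mono (G : sgraph) (S : {set vert G}) k k' v :
  k <= k' -> nballS S k v \subset nballS S k' v.
Proof.
elim: k' => [|k' IH]; first by rewrite leqn0 => /eqP ->.
rewrite leq_eqVlt => /orP[/eqP -> //|/IH H] /=.
by apply: (subset_trans H); apply: subsetUl.
Qed.

Lemma nball_path (G : sgraph) (S : {set vert G}) v p :
  path (@gadj G) v p -> all (fun z => z \notin S) p -> last v p \in nballS S (size p) v.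
Proof.
elim/last_ind: p => [|p a IH] /=; first by rewrite set11.
rewrite rcons_path all_rcons last_rcons size_rcons => /andP[Hp Ha] /andP[Hn Hall] /=.
rewrite inE; apply/orP; right; rewrite inE Hn /=.
by apply/existsP; exists (last v p); rewrite IH.
Qed.

Lemma nball_ex (G : sgraph) (S : {set vert G}) k v u :
  u \in nballS S k v -> exists q, [/\ path (@gadj G) v q, last v q = u, size q <= k &
     all (fun z => z \notin S) q].
Proof.
elim: k u => [|k IH] u /=.
  by rewrite inE => /eqP ->; exists [::].
rewrite inE => /orP[/IH [q [H1 H2 H3 H4]]|].
  by exists q; split=> //; apply: leqW.
rewrite inE => /andP[Hu /existsP[w /andP[Hw Hwu]]].
have [q [H1 H2 H3 H4]] := IH w Hw.
exists (rcons q u); rewrite rcons_path last_rcons size_rcons all_rcons H1 H2 Hwu Hu H4.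
by split.
Qed.

Lemma size_tseq d m (x : tvert d m) : size (tseq x) <= d.
Proof. by case: x => k t; rewrite /tseq /= size_tuple -ltnS. Qed.

Lemma tseq_inj d m : injective (@tseq d m).
Proof.
case=> k t [k' t']; rewrite /tseq /= => E.
have Ek : k = k' by apply: val_inj; rewrite /= -(size_tuple t) -(size_tuple t') E.
subst k'; congr existT; exact: val_inj.
Qed.

Lemma tseq_ex d m (s : seq 'I_m) : size s <= d -> exists x : tvert d m, tseq x = s.
Proof.
move=> H; have H' : size s < d.+1 by [].
by exists (@existT _ (fun k : 'I_d.+1 => k.-tuple 'I_m) (Ordinal H') (@Tuple (size s) _ s (eqxx _))).
Qed.

Lemma tchildP d m (x y : tvert d m) : tchild x y -> exists i, tseq y = rcons (tseq x) i.
Proof.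
rewrite /tchild => /andP[/eqP Hs /eqP Ht].
have := cat_take_drop (size (tseq x)) (tseq y); rewrite Ht.
have : size (drop (size (tseq x)) (tseq y)) = 1 by rewrite size_drop Hs subSnn.
case: (drop _ _) => [|i [|]] //= _ <-; exists i; by rewrite cats1.
Qed.

Lemma tchild_rcons d m (x y : tvert d m) i : tseq y = rcons (tseq x) i -> tchild x y.
Proof.
by move=> E; rewrite /tchild E size_rcons eqxx -cats1 take_size_cat /=.
Qed.

Lemma tchild_size d m (x y : tvert d m) : tchild x y -> size (tseq y) = (size (tseq x)).+1.
Proof. by case/andP=> /eqP. Qed.
Lemma dirBA d C : (forall r, exists m, forall G, C G -> forall v : vert G, rank_le r m d v) -> tree_rank_le C d.
Proof.
move=> H r; have [m Hm] := H r.+1; exists m.+1 => G CG [f [finj [P [HP Hdisj]]]].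
have key : forall h x, size (tseq x) + h <= d -> f x \notin ranked G r.+1 m h.
  elim=> [|h IH] x Hx; first by rewrite inE.
  rewrite /= inE negb_or IH /=; last by lia.
  rewrite inE; apply/existsP => -[S /and3P[HvS HS Hsub]].
  pose y i := odflt x [pick y | tseq y == rcons (tseq x) i].
  have Hy i : tseq (y i) = rcons (tseq x) i.
    rewrite /y; case: pickP => [z /eqP //|Hn].
    have [|z Hz] := @tseq_ex d m.+1 (rcons (tseq x) i); first by rewrite size_rcons; lia.
    by move: (Hn z); rewrite Hz eqxx.
  have Hadj i : tadj x (y i) by rewrite /tadj (tchild_rcons (Hy i)).
  pose pth i := rcons (P x (y i)) (f (y i)).
  have Hxy j : x != y j.
    apply/negP => /eqP E; have := congr1 size (Hy j); rewrite -E size_rcons; lia.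
  have Hdj i j z : z \in pth i -> z \in pth j -> i = j.
    move=> Hi Hj; apply/eqP; apply/negPn/negP => Hij.
    have Hyij : y i != y j.
      apply/negP => /eqP E; have := Hy i; rewrite E Hy => /(congr1 (last i)).
      by rewrite !last_rcons => E'; rewrite E' eqxx in Hij.
    move: Hi Hj; rewrite /pth !mem_rcons !inE => /orP[/eqP->|Hi] /orP[/eqP E|Hj].
    - by move/finj: E => E; rewrite E eqxx in Hyij.
    - by have [_ _ _ /(_ _ Hj (y i))] := HP x (y j) (Hadj j); rewrite eqxx.
    - by have [_ _ _ /(_ _ Hi (y j))] := HP x (y i) (Hadj i); rewrite E eqxx.
    - have := Hdisj x (y i) x (y j) (Hadj i) (Hadj j).
      rewrite (negbTE Hyij) (negbTE (Hxy j)) /= andbF => /(_ isT z Hi).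
      by rewrite Hj.
  pose Bad := [set i | has (mem S) (pth i)].
  have HB : #|Bad| <= #|S|.
    pose g i := nth (f x) (pth i) (find (mem S) (pth i)).
    have gS i : i \in Bad -> g i \in S /\ g i \in pth i.
      rewrite inE => Hh; split; first exact: (nth_find _ Hh).
      by apply: mem_nth; rewrite -has_find.
    rewrite -(card_in_imset (f:=g)); last first.
      move=> i j /gS[_ Hi] /gS[_ Hj] E; apply: (Hdj i j (g i)) => //; by rewrite E.
    by apply: subset_leq_card; apply/subsetP => z /imsetP[i /gS[Hi _] ->].
  have [i Hi] : exists i, i \notin Bad.
    case: (pickP (fun i => i \notin Bad)) => [i Hi|Hn]; first by exists i.
    have : [set: 'I_m.+1] \subset Bad.
      by apply/subsetP => i _; move: (Hn i) => /negbFE.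
    move/subset_leq_card; rewrite cardsT card_ord => H1; have := leq_trans H1 (leq_trans HB HS); by rewrite ltnn.
  have Hall : all (fun z => z \notin S) (pth i).
    apply/allP => z Hz; apply/negP => HzS; move: Hi; rewrite inE => /negP; apply.
    by apply/hasP; exists z.
  have [Hsz _ Hpath Hint] := HP x (y i) (Hadj i).
  have Hn := nball_path Hpath Hall.
  rewrite last_rcons in Hn.
  have Hs : size (pth i) <= r.+1 by rewrite size_rcons.
  have := subsetP (nball_mono S (f x) Hs) _ Hn => Hn'.
  have Hne : f (y i) != f x.
    by apply/negP => /eqP /finj E; move: (Hxy i); rewrite E eqxx.
  have : f (y i) \in nballS S r.+1 (f x) :\ f x by rewrite in_setD1 Hne Hn'.
  move/(subsetP Hsub); apply/negP; apply: IH.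
  rewrite Hy size_rcons; lia.
have [z Hz] := @tseq_ex d m.+1 [::] isT.
have := Hm G CG (f z); rewrite /rank_le; apply/negP; apply: key.
by rewrite Hz.
Qed.

Fixpoint allseq (M h : nat) : seq (seq 'I_M) :=
  match h with
  | 0 => [::]
  | h'.+1 => flatten [seq [:: i] :: map (cons i) (allseq M h') | i <- enum 'I_M]
  end.

Lemma mem_allseq M h s : (s \in allseq M h) = (0 < size s <= h).
Proof.
elim: h s => [|h IH] s /=; first by rewrite in_nil; case: (size s).
apply/flatten_mapP/idP.
  case=> i _; rewrite inE => /orP[/eqP -> // | /mapP [t Ht ->]].
  by move: Ht; rewrite IH /= ltnS => /andP[].
case: s => [|j t] //= H; exists j; first by rewrite mem_enum.
rewrite inE; case: t H => [|a t'] H; first by rewrite eqxx.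
by apply/orP; right; apply/mapP; exists (a :: t'); rewrite ?IH.
Qed.

Definition Lst (G : sgraph) M h (F : seq 'I_M -> vert G) (Q : seq 'I_M -> seq (vert G)) :=
  F [::] :: flatten [seq Q s ++ [:: F s] | s <- allseq M h].

Fixpoint cst r M h := match h with 0 => 1 | h'.+1 => 1 + M * (r + cst r M h') end.

Definition good (G : sgraph) r M h (v : vert G) (F : seq 'I_M -> vert G) (Q : seq 'I_M -> seq (vert G)) :=
  [/\ F [::] = v,
     (forall s (i : 'I_M), size s < h -> size (Q (rcons s i)) <= r /\
        path (@gadj G) (F s) (rcons (Q (rcons s i)) (F (rcons s i)))),
     uniq (Lst h F Q) & size (Lst h F Q) <= cst r M h].

Lemma uniq_flat1 (T U : eqType) (f : T -> seq U) A s :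
  uniq (flatten (map f A)) -> s \in A -> uniq (f s).
Proof.
elim: A => //= a A IH; rewrite cat_uniq inE => /and3P[H1 _ H3] /orP[/eqP->//|].
exact: IH.
Qed.

Lemma uniq_flat2 (T U : eqType) (f : T -> seq U) A s t x :
  uniq (flatten (map f A)) -> s \in A -> t \in A -> x \in f s -> x \in f t -> s = t.
Proof.
elim: A => //= a A IH; rewrite cat_uniq !inE => /and3P[H1 H2 H3] Hs Ht Hxs Hxt.
have Hfl : forall t, t \in A -> x \in f t -> x \notin f a.
  move=> t' Ht' Hx'; apply/negP => Ha; move/hasP: H2; apply; exists x => //.
  by apply/flatten_mapP; exists t'.
case/orP: Hs => [/eqP Es|Hs]; case/orP: Ht => [/eqP Et|Ht].
- by rewrite Es Et.
- by move: (Hfl t Ht Hxt); rewrite -Es Hxs.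
- by move: (Hfl s Hs Hxs); rewrite -Et Hxt.
- exact: IH.
Qed.

Lemma path_rev (G : sgraph) (x y : vert G) q :
  path (@gadj G) x (rcons q y) -> path (@gadj G) y (rcons (rev q) x).
Proof.
have E := rev_path (@gadj G) x (rcons q y).
rewrite last_rcons belast_rcons rev_cons in E; rewrite E => H.
by rewrite (@eq_path _ _ (@gadj G)) // => a b; apply: gsym.
Qed.

Lemma good_stm G r M d v F Q : @good G r M d v F Q -> shallow_top_minor r G (@tadj d M).
Proof.
case=> Hv Hp Hu _; move: Hu; rewrite /Lst /= => /andP[Hnot Hu].
pose A := allseq M d.
have Hin : forall s x, s \in A -> x \in Q s ++ [:: F s] -> x \in flatten [seq Q s ++ [:: F s] | s <- A].
  by move=> s x Hs Hx; apply/flatten_mapP; exists s.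
have HF : forall s, s \in A -> F s \in Q s ++ [:: F s] by move=> s _; rewrite mem_cat mem_seq1 eqxx orbT.
have HQ : forall s x, x \in Q s -> x \in Q s ++ [:: F s] by move=> s x H; rewrite mem_cat H.
have Finj : forall s t, size s <= d -> size t <= d -> F s = F t -> s = t.
  move=> [|a s] [|b t] Hs Ht E //.
  - have Hb : b :: t \in A by rewrite mem_allseq.
    by move: Hnot; rewrite E (Hin _ _ Hb (HF _ Hb)).
  - have Ha : a :: s \in A by rewrite mem_allseq.
    by move: Hnot; rewrite -E (Hin _ _ Ha (HF _ Ha)).
  - have Ha : a :: s \in A by rewrite mem_allseq.
    have Hb : b :: t \in A by rewrite mem_allseq.
    by apply: (uniq_flat2 Hu Ha Hb (HF _ Ha)); rewrite E; apply: HF.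
have Qnot : forall s t x, s \in A -> x \in Q s -> size t <= d -> x != F t.
  move=> s [|b t] x Hs Hx Ht; apply/negP => /eqP E; subst x.
    by move: Hnot; rewrite (Hin _ _ Hs (HQ _ _ Hx)).
  have Hb : b :: t \in A by rewrite mem_allseq.
  have E := uniq_flat2 Hu Hs Hb (HQ _ _ Hx) (HF _ Hb); subst s.
  move: (uniq_flat1 Hu Hb); rewrite cat_uniq => /and3P[_ /hasP H _].
  by apply: H; exists (F (b :: t)); rewrite ?mem_seq1.
have Qdisj : forall s t x, s \in A -> t \in A -> x \in Q s -> x \in Q t -> s = t.
  by move=> s t x Hs Ht Hx Hx'; apply: (uniq_flat2 Hu Hs Ht (HQ _ _ Hx) (HQ _ _ Hx')).
have Quniq : forall s, s \in A -> uniq (Q s).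
  by move=> s Hs; move: (uniq_flat1 Hu Hs); rewrite cat_uniq => /andP[].
have chA : forall (a b : tvert d M), tchild a b -> tseq b \in A.
  move=> a b Hab; rewrite mem_allseq; have := size_tseq b; by rewrite (tchild_size Hab).
exists (fun x => F (tseq x)); split.
  by move=> a b /Finj E; apply: tseq_inj; apply: E; apply: size_tseq.
pose P (a b : tvert d M) := if tchild a b then Q (tseq b) else rev (Q (tseq a)).
have memP : forall a b x, tadj a b -> x \in P a b -> exists p ch, [/\ tchild p ch,
    x \in Q (tseq ch) & (p = a /\ ch = b) \/ (p = b /\ ch = a)].
  move=> a b x; rewrite /tadj /P; case: ifP => Hab /= Hba.
    by move=> Hx; exists a, b; split => //; left.
  by rewrite mem_rev => Hx; exists b, a; split => //; right.
exists P; split.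
  move=> a b; rewrite /tadj /P; case: ifP => Hab /=.
    have [i Hi] := tchildP Hab => _.
    have Hsa : size (tseq a) < d by have := size_tseq b; rewrite Hi size_rcons.
    have [H1 H2] := Hp _ i Hsa; rewrite -Hi in H1 H2.
    split => //; first exact: Quniq (chA _ _ Hab).
    move=> x Hx c; apply: Qnot (chA _ _ Hab) Hx (size_tseq c).
  move=> Hba; have [i Hi] := tchildP Hba.
  have Hsa : size (tseq b) < d by have := size_tseq a; rewrite Hi size_rcons.
  have [H1 H2] := Hp _ i Hsa; rewrite -Hi in H1 H2.
  split; first by rewrite size_rev.
  - by rewrite rev_uniq; exact: Quniq (chA _ _ Hba).
  - exact: path_rev.
  - move=> x; rewrite mem_rev => Hx c; apply: Qnot (chA _ _ Hba) Hx (size_tseq c).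
move=> a b c e Hab Hce Hne x Hx; apply/negP => Hx'.
have [p1 [ch1 [Hc1 Hx1 E1]]] := memP _ _ _ Hab Hx.
have [p2 [ch2 [Hc2 Hx2 E2]]] := memP _ _ _ Hce Hx'.
have Ech := Qdisj _ _ _ (chA _ _ Hc1) (chA _ _ Hc2) Hx1 Hx2.
move/tseq_inj: Ech => Ech; subst ch2.
have [i1 Hi1] := tchildP Hc1; have [i2 Hi2] := tchildP Hc2.
rewrite Hi1 in Hi2; case/rcons_inj: Hi2 => /tseq_inj Ep _; subst p2.
by case: E1 => [[? ?]|[? ?]]; case: E2 => [[? ?]|[? ?]]; subst;
  rewrite !eqxx ?orbT in Hne.
Qed.

Lemma flat_blocks (T U : Type) (f : seq T -> seq U) (A : seq (seq T)) (l : seq T) :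
  flatten (map f (flatten [seq [:: i] :: map (cons i) A | i <- l])) =
  flatten [seq f [:: i] ++ flatten [seq f (i :: s) | s <- A] | i <- l].
Proof.
elim: l => //= i l IH; rewrite map_cat flatten_cat IH -map_comp /=.
by rewrite catA.
Qed.

Lemma card_seqset (T : finType) (s : seq T) : #|[set z in s]| <= size s.
Proof. by rewrite cardsE; apply: card_size. Qed.

Lemma embed (G : sgraph) r M m h : forall (v : vert G) (X : {set vert G}),
  v \notin ranked G r m h -> v \notin X -> #|X| + cst r M h <= m ->
  exists F Q, @good G r M h v F Q /\ all (fun z => z \notin X) (Lst h F Q).
Proof.
elim: h => [|h IH] v X Hv HvX HX.
  exists (fun _ => v), (fun _ => [::]); split; last by rewrite /Lst /= HvX.
  by split => //; case.
pose Data := (seq (vert G) * (seq 'I_M -> vert G) * (seq 'I_M -> seq (vert G)))%type.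
pose blk (dt : Data) := dt.1.1 ++ Lst h dt.1.2 dt.2.
pose Bk (g : nat -> Data) k := flatten [seq blk (g i) | i <- iota 0 k].
pose ok (dt : Data) := [/\ size dt.1.1 <= r, path (@gadj G) v (rcons dt.1.1 (dt.1.2 [::]))
   & good r h (dt.1.2 [::]) dt.1.2 dt.2].
have inner : forall k, k <= M -> exists g : nat -> Data, [/\ forall i, i < k -> ok (g i),
   uniq (v :: Bk g k), all (fun z => z \notin X) (v :: Bk g k) &
   size (Bk g k) <= k * (r + cst r M h)].
  elim=> [|k IHk] Hk.
    exists (fun _ => ([::], fun _ => v, fun _ => [::])); split => //=.
    by rewrite HvX.
  have [g [Hok Hu Ha Hs]] := IHk (ltnW Hk).
  pose S := X :|: [set z in Bk g k].
  have HvB : v \notin Bk g k by move: Hu => /= /andP[].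
  have HvS : v \notin S by rewrite in_setU negb_or HvX inE.
  have Hkm : k.+1 * (r + cst r M h) <= M * (r + cst r M h) by apply: leq_mul.
  have HSm : #|S| <= m.
    apply: leq_trans (leq_card_setU _ _) _.
    have := card_seqset (Bk g k); move: HX => /=; rewrite mulSn in Hkm => HX H1.
    move: (#|X|) (#|[set z in Bk g k]|) (size (Bk g k)) (k * (r + cst r M h)) (M * (r + cst r M h)) (r + cst r M h) Hs Hkm HX H1.
    clear; lia.
  move: Hv; rewrite /= inE negb_or => /andP[_]; rewrite inE => /existsPn /(_ S).
  rewrite HvS HSm /= => /subsetPn [u Hu1 Hu2].
  move: Hu1; rewrite in_setD1 => /andP[Huv Hub].
  have [q [Hq1 Hq2 Hq3 Hq4]] := nball_ex Hub.
  have [q' [P1 P2 P3 P4]] : exists q', [/\ path (@gadj G) v q', uniq (v :: q'),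
      {subset q' <= q} & last v q' = u].
    by rewrite -Hq2; case: (shortenP Hq1) => q' P1 P2 P3; exists q'.
  have Hsq' : size q' <= r.
    apply: leq_trans Hq3; apply: uniq_leq_size P3; by case/andP: P2.
  have Hq'S : all (fun z => z \notin S) q'.
    by apply/allP => z /P3 Hz; move/allP: Hq4; apply.
  case/lastP: q' P1 P2 P3 P4 Hsq' Hq'S => [|p u'] P1 P2 P3 P4 Hsq' Hq'S.
    by move: Huv; rewrite -P4 eqxx.
  rewrite last_rcons in P4; subst u'.
  pose X' := X :|: [set z in v :: Bk g k ++ p].
  have HuS : u \notin S by move: Hq'S; rewrite all_rcons => /andP[].
  have HpS : all (fun z => z \notin S) p by move: Hq'S; rewrite all_rcons => /andP[].
  have Hvp : v \notin p by move: P2; rewrite /= mem_rcons inE negb_or => /andP[/andP[]].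
  have Hup : u \notin p by move: P2; rewrite /= rcons_uniq => /andP[_ /andP[]].
  have Hpu : uniq p by move: P2; rewrite /= rcons_uniq => /andP[_ /andP[]].
  have HuX' : u \notin X'.
    rewrite in_setU negb_or inE in_cons mem_cat !negb_or Hup andbT Huv.
    by move: HuS; rewrite in_setU negb_or inE => /andP[-> ->].
  have HX' : #|X'| + cst r M h <= m.
    have := leq_card_setU X [set z in v :: Bk g k ++ p].
    have := card_seqset (v :: Bk g k ++ p); rewrite /= size_cat.
    move: HX; rewrite /= mulSn in Hkm; rewrite size_rcons in Hsq' => HX H1 H2.
    rewrite -/X' in H2; move: H2 => /(fun H => H.1) H2; rewrite /= in HX.
    move: (#|X|) (#|X'|) (#|[set z in v :: Bk g k ++ p]|) (size (Bk g k)) (size p) (k * (r + cst r M h)) (M * (r + cst r M h)) (cst r M h) Hs Hkm HX H1 H2 Hsq'.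
    clear; lia.
  have [F' [Q' [Hg Hall']]] := IH u X' Hu2 HuX' HX'.
  exists (fun i => if i == k then (p, F', Q') else g i).
  have EB : Bk (fun i => if i == k then (p, F', Q') else g i) k.+1 = Bk g k ++ (p ++ Lst h F' Q').
    rewrite /Bk -addn1 iotaD map_cat flatten_cat add0n /= eqxx cats0 /blk /=.
    congr (flatten _ ++ _); apply/eq_in_map => i; rewrite mem_iota /= add0n.
    by move=> Hi; rewrite (ltn_eqF Hi).
  rewrite EB.
  have [Hg1 _ Hg3 Hg4] := Hg.
  split.
  - move=> i; rewrite ltnS leq_eqVlt => /orP[/eqP ->|Hi]; last by rewrite (ltn_eqF Hi); apply: Hok.
    rewrite eqxx; rewrite /ok /= Hg1.
    apply: And3 => //.
    by rewrite size_rcons in Hsq'; apply: ltnW.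
  - have nX' : forall z, z \in Lst h F' Q' -> z \notin X' by move/allP: Hall'.
    have inX' : forall z, z \in v :: Bk g k ++ p -> z \in X'.
      by move=> z Hz; rewrite in_setU inE Hz orbT.
    have nS : forall z, z \in p -> z \notin S by move/allP: HpS.
    have vL : v \notin Lst h F' Q'.
      by apply/negP => Hv'; move: (nX' v Hv'); rewrite inX' // mem_head.
    rewrite !mem_cat (negbTE HvB) (negbTE Hvp) (negbTE vL) /=.
    move: Hu => /= /andP[_ HuB].
    rewrite !cat_uniq Hpu Hg3 HuB ?andTb ?andbT; apply/andP; split.
      apply/hasPn => z; rewrite mem_cat => /orP[Hz|Hz].
        by apply/negP => HzB; move: (nS z Hz); rewrite in_setU inE HzB orbT.
      by apply/negP => HzB; move: (nX' z Hz); rewrite inX' // in_cons mem_cat HzB orbT.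
    apply/hasPn => z Hz; apply/negP => Hzp.
    by move: (nX' z Hz); rewrite inX' // in_cons mem_cat Hzp !orbT.
  - have nX' : forall z, z \in Lst h F' Q' -> z \notin X' by move/allP: Hall'.
    have nS : forall z, z \in p -> z \notin S by move/allP: HpS.
    rewrite HvX !all_cat andTb; move: Ha => /= /andP[_ ->]; rewrite andTb; apply/andP; split.
      by apply/allP => z /nS; rewrite in_setU negb_or => /andP[].
    apply/(@allP _ _ (Lst h F' Q')) => z Hz; have := nX' z Hz; by rewrite in_setU negb_or => /andP[].
  - rewrite !size_cat; rewrite size_rcons in Hsq'; rewrite mulSn.
    move: (size (Bk g k)) (size p) (size (Lst h F' Q')) (k * (r + cst r M h)) (cst r M h) Hs Hsq' Hg4.
    clear; lia.
have [g [Hok Hu Ha Hs]] := inner M (leqnn M).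
pose F (s : seq 'I_M) := if s is i :: s' then (g i).1.2 s' else v.
pose Q (s : seq 'I_M) := if s is i :: s' then (if s' is [::] then (g i).1.1 else (g i).2 s') else [::].
have EL : Lst h.+1 F Q = v :: Bk g M.
  rewrite /Lst /= flat_blocks; congr (_ :: _).
  rewrite /Bk -val_enum_ord -map_comp; congr flatten; apply/eq_map => i /=.
  rewrite /blk /Lst /= -catA /=; congr (_ ++ (_ :: flatten _)).
  by apply/eq_in_map => -[|a s] //; rewrite mem_allseq.
exists F, Q; rewrite EL; split; last by [].
split => //.
- move=> [|j s] i /= Hs'.
    by case: (Hok i (ltn_ord i)) => H1 H2 _; split.
  case E: (rcons s i) => [|a t]; first by case: s {Hs'} E.
  rewrite -E.
  case: (Hok j (ltn_ord j)) => _ _ [_ Hp _ _]; exact: Hp.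
- by rewrite EL.
- by rewrite EL /= add1n ltnS.
Qed.

Lemma dirAB d C : tree_rank_le C d ->
  forall r : nat, exists m : nat, forall G : sgraph, C G -> forall v : vert G, rank_le r m d v.
Proof.
move=> H r; have [M HM] := H r; exists (cst r M d) => G CG v; rewrite /rank_le.
case: (boolP (v \in ranked G r (cst r M d) d)) => // Hv; exfalso.
have Hc : #|(set0 : {set vert G})| + cst r M d <= cst r M d by rewrite cards0.
have [F [Q [Hg _]]] := @embed G r M (cst r M d) d v set0 Hv (negbT (in_set0 v)) Hc.
exact: HM G CG (good_stm Hg).
Qed.

Theorem theorem1p3 (d : nat) (C : graph_class) :
  tree_rank_le C d <->
  (forall r : nat, exists m : nat,
     forall G : sgraph, C G -> forall v : vert G, rank_le r m d v).
Proof. split; [exact: dirAB | exact: dirBA]. Qed.
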